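(* For every integer $m\ge 0$ and every $n\ge 2$, $$v_n(x,m,s,q)=x\,v_{n-1}(x,m,s,q)-s\,\lambda_{n-2}(m,q)\,\frac{q^{n-1}}{(1+q^{n+m-2})(1+q^{n+m-1})}\,v_{n-2}(x,m,s,q),$$ where $\lambda_0(m,q)=\frac{1+q^m}{[m+1]}$ and $\lambda_n(m,q)=\frac{[n+1]\,[n+2m]}{[n+m]\,[n+m+1]}$ for $n\ge1$.
   Context: $q$ is an indeterminate; $[n]=\frac{1-q^n}{1-q}$, $[n]!=[1]\cdots[n]$, $[0]!=1$, $(a;q)_n=(1-a)(1-qa)\cdots(1-q^{n-1}a)$, $(a;q)_0=1$. For an integer $m\ge 0$ and indeterminates $x,s$, $$v_n(x,m,s,q)=\sum_{k=0}^{\lfloor n/2\rfloor}(-s)^kq^{k^2}\frac{[n]!}{[k]!\,[n-2k]!}\,\frac{[m+n-k-1]!}{[m+n-1]!}\,\frac{1}{(-q;q)_k\,(-q^{n+m-k};q)_k}\,x^{n-2k}\quad(n\ge1),\qquad v_0=1.$$ *)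

(* Defs.v *)
From HB Require Import structures.
From mathcomp Require Import all_boot all_order all_algebra.
Set Implicit Arguments. Unset Strict Implicit. Unset Printing Implicit Defensive.
Import Order.TTheory GRing.Theory Num.Theory.
Local Open Scope ring_scope.

Section QDefs.
Variable F : fieldType.

Definition qint (q : F) (n : nat) : F := \sum_(i < n) q ^+ i.

Definition qfact (q : F) (n : nat) : F := \prod_(i < n) qint q i.+1.

Definition qpoch (a q : F) (n : nat) : F := \prod_(i < n) (1 - q ^+ i * a).

Definition vpoly (x : F) (m : nat) (s q : F) (n : nat) : F :=
  if n is 0 then 1 else
  \sum_(k < (n./2).+1)
    (- s) ^+ k * q ^+ (k * k)
    * (qfact q n / (qfact q k * qfact q (n - 2 * k)))
    * (qfact q (m + n - k - 1) / qfact q (m + n - 1))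
    / (qpoch (- q) q k * qpoch (- q ^+ (n + m - k)) q k)
    * x ^+ (n - 2 * k).

Definition qlambda (n m : nat) (q : F) : F :=
  if n is 0 then (1 + q ^+ m) / qint q (m + 1)
  else qint q (n + 1) * qint q (n + 2 * m) / (qint q (n + m) * qint q (n + m + 1)).

End QDefs.

(* Main.v *)
Require Import Defs.
From HB Require Import structures.
From mathcomp Require Import all_boot all_order all_algebra.
From mathcomp Require Import zify.
From mathcomp.algebra_tactics Require Import ring.
Import GRing.Theory.
Set Implicit Arguments. Unset Strict Implicit.
Local Open Scope ring_scope.

Definition cf (F : fieldType) (m : nat) (s q : F) (n k : nat) : F :=
    (- s) ^+ k * q ^+ (k * k)
    * (qfact q n / (qfact q k * qfact q (n - 2 * k)))
    * (qfact q (m + n - k - 1) / qfact q (m + n - 1))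
    / (qpoch (- q) q k * qpoch (- q ^+ (n + m - k)) q k).

Definition cg (F : fieldType) (m : nat) (s q : F) (n k : nat) : F :=
  if (2 * k <= n)%N then cf m s q n k else 0.

Lemma qfact_neq0 (F : fieldType) (q : F) n
  (hq_int : forall k : nat, (0 < k)%N -> qint q k != 0) : qfact q n != 0.
Proof. by rewrite /qfact; apply/prodf_neq0 => i _; apply: hq_int. Qed.

Lemma qfactS (F : fieldType) (q : F) n : qfact q n.+1 = qfact q n * qint q n.+1.
Proof. by rewrite /qfact big_ord_recr. Qed.

Lemma qfact0 (F : fieldType) (q : F) : qfact q 0 = 1.
Proof. by rewrite /qfact big_ord0. Qed.

Lemma qpoch0 (F : fieldType) (a q : F) : qpoch a q 0 = 1.
Proof. by rewrite /qpoch big_ord0. Qed.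

Lemma qpochS (F : fieldType) (a q : F) n : qpoch a q n.+1 = qpoch a q n * (1 - q ^+ n * a).
Proof. by rewrite /qpoch big_ord_recr. Qed.

Lemma qpochSl (F : fieldType) (a q : F) n : qpoch a q n.+1 = (1 - a) * qpoch (q * a) q n.
Proof.
rewrite /qpoch big_ord_recl expr0 mul1r; congr (_ * _).
by apply: eq_bigr => i _; rewrite exprS /= mulrA [_ * q]mulrC -mulrA.
Qed.

Lemma qintD (F : fieldType) (q : F) a b : qint q (a + b) = qint q a + q ^+ a * qint q b.
Proof.
rewrite /qint big_split_ord /=; congr (_ + _).
by rewrite mulr_sumr; apply: eq_bigr => i _; rewrite exprD.
Qed.

Lemma cf0 (F : fieldType) m (s q : F) n
  (hq_int : forall k : nat, (0 < k)%N -> qint q k != 0) : cf m s q n 0 = 1.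
Proof.
rewrite /cf !qpoch0 qfact0 !expr0 !mul1r muln0 !subn0 !divff ?mulr1 ?invr1 //;
  try exact: qfact_neq0; by rewrite mulr1.
Qed.

Lemma vpoly_ext (F : fieldType) (x : F) m (s q : F) n N
  (hq_int : forall k : nat, (0 < k)%N -> qint q k != 0) :
  (n./2 < N)%N -> vpoly x m s q n = \sum_(k < N) cg m s q n k * x ^+ (n - 2 * k).
Proof.
move=> hN.
have -> : vpoly x m s q n = \sum_(k < n./2.+1) cf m s q n k * x ^+ (n - 2 * k).
  case: n hN => [|n] hN /=; last by [].
  by rewrite big_ord1 cf0 // mul1r expr0.
rewrite (big_ord_widen N (fun k => cf m s q n k * x ^+ (n - 2 * k))) //.
rewrite big_mkcond /=; apply: eq_bigr => i _.
rewrite /cg ltnS geq_half_double -mul2n.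
by case: ifP => //; rewrite mul0r.
Qed.

Definition LL (F : fieldType) (m : nat) (s q : F) (p : nat) : F :=
  s * qlambda p m q * q ^+ p.+1 / ((1 + q ^+ (p + m)) * (1 + q ^+ (p + m).+1)).

Lemma qintS (F : fieldType) (q : F) n : qint q n.+1 = qint q n + q ^+ n.
Proof. by rewrite /qint big_ord_recr. Qed.

Lemma qint0 (F : fieldType) (q : F) : qint q 0 = 0.
Proof. by rewrite /qint big_ord0. Qed.

Lemma qintE (F : fieldType) (q : F) n : q != 1 -> qint q n = (1 - q ^+ n) / (1 - q).
Proof.
move=> q1; have q1' : 1 - q != 0 by rewrite subr_eq0 eq_sym.
elim: n => [|n IH]; first by rewrite qint0 expr0 subrr mul0r.
by rewrite qintS IH exprS; field.
Qed.

Lemma qint1 (F : fieldType) (q : F) : qint q 1 = 1.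
Proof. by rewrite /qint big_ord1 expr0. Qed.

Lemma qpoch_shift (F : fieldType) (q : F) t k :
  1 + q ^+ t != 0 ->
  qpoch (- q ^+ t.+1) q k.+1 =
  qpoch (- q ^+ t) q k * (1 - q ^+ k * - q ^+ t) * (1 - q ^+ k.+1 * - q ^+ t) / (1 + q ^+ t).
Proof.
move=> h.
have := qpochSl (- q ^+ t) q k.+1.
rewrite mulrN -exprS opprK (qpochS _ _ k.+1) qpochS => E.
rewrite -(mulKf h (qpoch (- q ^+ t.+1) q k.+1)) -E; ring.
Qed.

Lemma sqS k : (k.+1 * k.+1 = k * k + (k + k + 1))%N.
Proof. rewrite mulSn mulnS; lia. Qed.

Ltac nz1 := match goal with
 | |- is_true (?x != 0) => match goal with
    | h : is_true (?y != 0) |- _ => (have ->: x = y by ring); exact h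
    end end.
Ltac nz2 := match goal with
 | |- is_true (?x != 0) => match goal with
    | h : is_true (?y != 0), h2 : is_true (?z != 0) |- _ =>
       (have ->: x = y * z by ring); exact (mulf_neq0 h h2)
    end end.
Ltac nz3 := match goal with
 | |- is_true (?x != 0) => match goal with
    | h : is_true (?y != 0), h2 : is_true (1 - ?q != 0) |- _ =>
       (have ->: x = y * (1 - q) by field; rewrite ?h2); exact (mulf_neq0 h h2)
    end end.
Ltac nzs := repeat (apply/andP; split); try (by []); try (by rewrite oner_eq0); (nz1 || nz2 || nz3).


Lemma coreA (F : fieldType) m (s q : F) k a
  (hq_int : forall k : nat, (0 < k)%N -> qint q k != 0)
  (hq_pow : forall j : nat, 1 + q ^+ j != 0) :
  cf m s q (2 * k + a.+1).+2 k.+1 =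
  cf m s q (2 * k + a.+1).+1 k.+1 - LL m s q (2 * k + a.+1) * cf m s q (2 * k + a.+1) k.
Proof.
rewrite /cf /LL /qlambda addnS.
have e1 : ((2 * k + a).+1.+2 - 2 * k.+1 = a.+1)%N by lia.
have e2 : ((2 * k + a).+1.+1 - 2 * k.+1 = a)%N by lia.
have e3 : ((2 * k + a).+1 - 2 * k = a.+1)%N by lia.
have e4 : (m + (2 * k + a).+1.+2 - k.+1 - 1 = (m + k + a).+1)%N by lia.
have e5 : (m + (2 * k + a).+1.+1 - k.+1 - 1 = (m + k + a))%N by lia.
have e6 : (m + (2 * k + a).+1 - k - 1 = (m + k + a))%N by lia.
have e7 : (m + (2 * k + a).+1.+2 - 1 = (m + (2 * k + a)).+2)%N by lia.
have e8 : (m + (2 * k + a).+1.+1 - 1 = (m + (2 * k + a)).+1)%N by lia.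
have e9 : (m + (2 * k + a).+1 - 1 = (m + (2 * k + a)))%N by lia.
have e10 : ((2 * k + a).+1.+2 + m - k.+1 = (m + k + a).+2)%N by lia.
have e11 : ((2 * k + a).+1.+1 + m - k.+1 = (m + k + a).+1)%N by lia.
have e12 : ((2 * k + a).+1 + m - k = (m + k + a).+1)%N by lia.
rewrite e1 e2 e3 e4 e5 e6 e7 e8 e9 e10 e11 e12.
clear e1 e2 e3 e4 e5 e6 e7 e8 e9 e10 e11 e12.
rewrite (@qpoch_shift F q (m + k + a).+1 k (hq_pow _)) !qpochS !qfactS.
have n1 := @qfact_neq0 F q k hq_int.
have n2 := @qfact_neq0 F q a hq_int.
have n3 := @qfact_neq0 F q (2 * k + a) hq_int.
have n4 := @qfact_neq0 F q (m + k + a) hq_int.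
have n5 := @qfact_neq0 F q (m + (2 * k + a)) hq_int.
have n6 : qpoch (- q) q k != 0.
  by apply/prodf_neq0 => i _; rewrite mulrN opprK -exprSr hq_pow.
have n7 : qpoch (- q ^+ (m + k + a).+1) q k != 0.
  by apply/prodf_neq0 => i _; rewrite mulrN opprK -exprD hq_pow.
have n8 : 1 - q ^+ k * - q != 0 by rewrite mulrN opprK -exprSr hq_pow.
have n9 : 1 - q ^+ k * - q ^+ (m + k + a).+1 != 0 by rewrite mulrN opprK -exprD hq_pow.
have n10 : 1 - q ^+ k.+1 * - q ^+ (m + k + a).+1 != 0 by rewrite mulrN opprK -exprD hq_pow.
have n11 := hq_pow (m + k + a).+1.
have n12 := hq_pow ((2 * k + a).+1 + m).
have n13 := hq_pow ((2 * k + a).+1 + m).+1.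
have i1 := hq_int k.+1 isT.
have i2 := hq_int a.+1 isT.
have i3 := hq_int (m + (2 * k + a)).+1 isT.
have i4 := hq_int (m + (2 * k + a)).+2 isT.
have i5 : qint q ((2 * k + a).+1 + m) != 0 by apply: hq_int; rewrite addSn.
have i6 : qint q ((2 * k + a).+1 + m + 1) != 0 by apply: hq_int; rewrite addn1.
move: n1 n2 n3 n4 n5 n6 n7 n8 n9 n10.
set Fk := qfact q k; set Fa := qfact q a; set F1 := qfact q (2 * k + a).
set Fr := qfact q (m + k + a); set Fd := qfact q (m + (2 * k + a)).
set P1 := qpoch (- q) q k; set G := qpoch (- q ^+ (m + k + a).+1) q k.
move=> n1 n2 n3 n4 n5 n6 n7 n8 n9 n10.
rewrite sqS.
rewrite mul2n -addnn in n8 n9 n10 n11 n12 n13 i1 i2 i3 i4 i5 i6 *.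
rewrite !addSn in n8 n9 n10 n11 n12 n13 i1 i2 i3 i4 i5 i6 *.
rewrite !(qintS, qintD, exprS, exprD, qint0, expr0) in n8 n9 n10 n11 n12 n13 i1 i2 i3 i4 i5 i6 *.
move: n8 n9 n10 n11 n12 n13 i1 i2 i3 i4 i5 i6.
have [q1|q1] := eqVneq q 1.
  rewrite q1 !expr1n.
  set K := qint 1 k; set A := qint 1 a; set Mq := qint 1 m.
  move=> n8 n9 n10 n11 n12 n13 i1 i2 i3 i4 i5 i6.
  field; nzs.
rewrite !(qintE _ q1).
set qk := q ^+ k; set qa := q ^+ a; set qm := q ^+ m; set qkk := q ^+ (k * k).
set sk := (- s) ^+ k.
move=> n8 n9 n10 n11 n12 n13 i1 i2 i3 i4 i5 i6.
have q1' : 1 - q != 0 by rewrite subr_eq0 eq_sym.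
field; nzs.
Qed.


Lemma coreB (F : fieldType) m (s q : F) k
  (hq_int : forall k : nat, (0 < k)%N -> qint q k != 0)
  (hq_pow : forall j : nat, 1 + q ^+ j != 0) :
  cf m s q (2 * k.+1).+2 k.+2 = - (LL m s q (2 * k.+1) * cf m s q (2 * k.+1) k.+1).
Proof.
rewrite /cf /LL /qlambda.
have e1 : ((2 * k.+1).+2 - 2 * k.+2 = 0)%N by lia.
have e3 : (2 * k.+1 - 2 * k.+1 = 0)%N by lia.
have e4 : (m + (2 * k.+1).+2 - k.+2 - 1 = (m + k).+1)%N by lia.
have e6 : (m + 2 * k.+1 - k.+1 - 1 = m + k)%N by lia.
have e7 : (m + (2 * k.+1).+2 - 1 = (m + (k + k)).+3)%N by lia.
have e9 : (m + 2 * k.+1 - 1 = (m + (k + k)).+1)%N by lia.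
have e10 : ((2 * k.+1).+2 + m - k.+2 = (m + k).+2)%N by lia.
have e12 : (2 * k.+1 + m - k.+1 = (m + k).+1)%N by lia.
have e0 : (2 * k.+1 = (k + k).+2)%N by lia.
rewrite e1 e3 e4 e6 e7 e9 e10 e12 e0.
clear e0 e1 e3 e4 e6 e7 e9 e10 e12.
rewrite (@qpoch_shift F q (m + k).+1 k.+1 (hq_pow _)) !qpochS !qfactS qfact0.
have n1 := @qfact_neq0 F q k hq_int.
have n3 := @qfact_neq0 F q (k + k) hq_int.
have n4 := @qfact_neq0 F q (m + k) hq_int.
have n5 := @qfact_neq0 F q (m + (k + k)) hq_int.
have n6 : qpoch (- q) q k != 0.
  by apply/prodf_neq0 => i _; rewrite mulrN opprK -exprSr hq_pow.
have n7 : qpoch (- q ^+ (m + k).+1) q k != 0.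
  by apply/prodf_neq0 => i _; rewrite mulrN opprK -exprD hq_pow.
have n8 : 1 - q ^+ k * - q != 0 by rewrite mulrN opprK -exprSr hq_pow.
have n8' : 1 - q ^+ k.+1 * - q != 0 by rewrite mulrN opprK -exprSr hq_pow.
have n9 : 1 - q ^+ k * - q ^+ (m + k).+1 != 0 by rewrite mulrN opprK -exprD hq_pow.
have n10 : 1 - q ^+ k.+1 * - q ^+ (m + k).+1 != 0 by rewrite mulrN opprK -exprD hq_pow.
have n10' : 1 - q ^+ k.+2 * - q ^+ (m + k).+1 != 0 by rewrite mulrN opprK -exprD hq_pow.
have n11 := hq_pow (m + k).+1.
have n12 := hq_pow ((k + k).+2 + m).
have n13 := hq_pow ((k + k).+2 + m).+1.
have i1 := hq_int k.+1 isT.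
have i2 := hq_int k.+2 isT.
have i3 := hq_int (m + (k + k)).+1 isT.
have i4 := hq_int (m + (k + k)).+2 isT.
have i4' := hq_int (m + (k + k)).+3 isT.
have i5 : qint q ((k + k).+2 + m) != 0 by apply: hq_int; rewrite addSn.
have i6 : qint q ((k + k).+2 + m + 1) != 0 by apply: hq_int; rewrite addn1.
move: n1 n3 n4 n5 n6 n7.
set Fk := qfact q k; set F1 := qfact q (k + k).
set Fr := qfact q (m + k); set Fd := qfact q (m + (k + k)).
set P1 := qpoch (- q) q k; set G := qpoch (- q ^+ (m + k).+1) q k.
move=> n1 n3 n4 n5 n6 n7.
rewrite !sqS.
rewrite mul2n -addnn in n8 n8' n9 n10 n10' n11 n12 n13 i1 i2 i3 i4 i4' i5 i6 *.
rewrite !addSn in n8 n8' n9 n10 n10' n11 n12 n13 i1 i2 i3 i4 i4' i5 i6 *.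
rewrite !(qintS, qintD, exprS, exprD, qint0, expr0) in n8 n8' n9 n10 n10' n11 n12 n13 i1 i2 i3 i4 i4' i5 i6 *.
move: n8 n8' n9 n10 n10' n11 n12 n13 i1 i2 i3 i4 i4' i5 i6.
have [q1|q1] := eqVneq q 1.
  rewrite q1 !expr1n.
  set K := qint 1 k; set Mq := qint 1 m.
  move=> n8 n8' n9 n10 n10' n11 n12 n13 i1 i2 i3 i4 i4' i5 i6.
  field; nzs.
rewrite !(qintE _ q1).
set qk := q ^+ k; set qm := q ^+ m; set qkk := q ^+ (k * k).
set sk := (- s) ^+ k.
move=> n8 n8' n9 n10 n10' n11 n12 n13 i1 i2 i3 i4 i4' i5 i6.
have q1' : 1 - q != 0 by rewrite subr_eq0 eq_sym.
field; nzs.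
Qed.


Lemma coreC (F : fieldType) m (s q : F)
  (hq_int : forall k : nat, (0 < k)%N -> qint q k != 0)
  (hq_pow : forall j : nat, 1 + q ^+ j != 0) :
  cf m s q 2 1 = - (LL m s q 0 * cf m s q 0 0).
Proof.
rewrite cf0 // mulr1 /cf /LL /qlambda.
have e1 : (m + 2 - 1 - 1 = m)%N by lia.
have e2 : (m + 2 - 1 = m.+1)%N by lia.
have e3 : (2 + m - 1 = m.+1)%N by lia.
rewrite e1 e2 e3 add0n addn1 !qpochS !qpoch0 !qfactS !qfact0 qintS qintS qint0 /=.
have n1 := @qfact_neq0 F q m hq_int.
have i1 := hq_int m.+1 isT.
have n2 := hq_pow m.
have n3 := hq_pow m.+1.
have n4 := hq_pow 1.
have i2 : qint q 2 != 0 by exact: hq_int.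
rewrite !qintS qint0 in i2.
move: n1 i1.
set Fm := qfact q m; set Mq := qint q m.+1.
move=> n1 i1.
rewrite ?expr0 ?expr1 ?mul1r ?subn0 ?expr0 in n4 i2 *.
rewrite qint1.
field; nzs.
Qed.


Lemma core (F : fieldType) m (s q : F) p j
  (hq_int : forall k : nat, (0 < k)%N -> qint q k != 0)
  (hq_pow : forall j : nat, 1 + q ^+ j != 0) :
  (2 * j <= p)%N ->
  cf m s q p.+2 j.+1 = cg m s q p.+1 j.+1 - LL m s q p * cf m s q p j.
Proof.
move=> hj.
have -> : p = (2 * j + (p - 2 * j))%N by lia.
case: (p - 2 * j)%N => [|a].
  rewrite addn0 /cg.
  have -> : (2 * j.+1 <= (2 * j).+1)%N = false by lia.
  case: j hj => [|k] _.
    by rewrite (@coreC F m s q hq_int hq_pow) add0r.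
  by rewrite (@coreB F m s q k hq_int hq_pow) add0r.
rewrite /cg.
have -> : (2 * j.+1 <= (2 * j + a.+1).+1)%N = true by lia.
exact: coreA.
Qed.

Lemma vpoly_hl (F : fieldType) (x : F) m (s q : F) n N
  (hq_int : forall k : nat, (0 < k)%N -> qint q k != 0) :
  (n < N.*2)%N -> vpoly x m s q n = \sum_(k < N) cg m s q n k * x ^+ (n - 2 * k).
Proof. by move=> h; apply: vpoly_ext => //; rewrite ltn_half_double. Qed.

Unset Implicit Arguments. Set Strict Implicit.

Theorem mainTheorem12 (F : fieldType) (x s q : F) (m n : nat)
  (hq_int : forall k : nat, (0 < k)%N -> qint q k != 0)
  (hq_pow : forall j : nat, 1 + q ^+ j != 0)
  (hn : (2 <= n)%N) :
  vpoly x m s q n =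
    x * vpoly x m s q (n - 1)
    - s * qlambda (n - 2) m q * q ^+ (n - 1)
        / ((1 + q ^+ (n + m - 2)) * (1 + q ^+ (n + m - 1)))
        * vpoly x m s q (n - 2).
Proof.
move: hn; case: n => [|[|p]] // _.
have e1 : (p.+2 - 1 = p.+1)%N by lia.
have e2 : (p.+2 - 2 = p)%N by lia.
have e3 : (p.+2 + m - 2 = p + m)%N by lia.
have e4 : (p.+2 + m - 1 = (p + m).+1)%N by lia.
rewrite e1 e2 e3 e4 -/(LL m s q p).
rewrite (@vpoly_hl F x m s q p.+2 p.+2 hq_int); last by rewrite -addnn; lia.
rewrite (@vpoly_hl F x m s q p.+1 p.+2 hq_int); last by rewrite -addnn; lia.
rewrite (@vpoly_hl F x m s q p p.+1 hq_int); last by rewrite -addnn; lia.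
rewrite big_ord_recl [X in x * X]big_ord_recl.
rewrite mulrDr !mulr_sumr -addrA -sumrB.
congr (_ + _).
  by rewrite /cg /= !cf0 // !mul1r !subn0 exprS.
apply eq_bigr => i _.
rewrite /=; have -> : bump 0 i = i.+1 by [].
have [hi|hi] := leqP (2 * i) p.
  rewrite {1}/cg.
  have -> : (2 * i.+1 <= p.+2)%N = true by lia.
  rewrite (@core F m s q p i hq_int hq_pow hi).
  have -> : (p.+2 - 2 * i.+1 = p - 2 * i)%N by lia.
  have -> : cg m s q p i = cf m s q p i by rewrite /cg hi.
  have -> : x * (cg m s q p.+1 i.+1 * x ^+ (p.+1 - 2 * i.+1)) =
            cg m s q p.+1 i.+1 * x ^+ (p - 2 * i).
    rewrite /cg; case: ifP => h; last by rewrite !mul0r mulr0.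
    have -> : (p - 2 * i = (p.+1 - 2 * i.+1).+1)%N by lia.
    by rewrite exprS; ring.
  ring.
rewrite /cg.
have -> : (2 * i.+1 <= p.+2)%N = false by lia.
have -> : (2 * i.+1 <= p.+1)%N = false by lia.
have -> : (2 * i <= p)%N = false by lia.
ring.
Qed.
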